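(* $f:X\to X$ is topologically exact: for every nonempty open subset $U\subset X$ there exists $n\ge0$ such that $f^nU\supset X\setminus\{x=0\}$.
   Context: Let $\mathbb{T}=\mathbb{R}/\mathbb{Z}$, $M=[0,1]\times\mathbb{T}$ with coordinates $(x,\theta)$. Fix $\gamma>0$. Let $u:[0,\tfrac34]\times\mathbb{T}\to(0,\infty)$ be $C^2$ with $u(0,\theta)=c_0>0$. Define $f(x,\theta)=(f_1(x,\theta),4\theta\bmod1)$, $f_1(x,\theta)=x(1+x^\gamma u(x,\theta))$ for $0\le x\le\tfrac34$, $f_1=4x-3$ for $\tfrac34<x\le1$. Standing assumptions: $x(1+x^\gamma u)\le1$ on $[0,\tfrac34]\times\mathbb{T}$; $|(Df)_{(x,\theta)}v|\ge|v|$ on $[0,\tfrac34]\times\mathbb{T}$; $f_1(\tfrac34,\theta)>\tfrac{15}{16}$; $\sup|x\,\partial u/\partial x|$, $\sup|\partial u/\partial\theta|$ sufficiently small. Let $X_i=\{(x,\theta)\in M:0\le x\le f_1(\tfrac34,\tfrac{i+\theta}{4})\}$ for $i=0,1,2,3$ and $X=\bigcup_iX_i$ (an $f$-invariant set with $f(X)=X$); open means relatively open in $X$. *)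

(* Defs.v *)
From Stdlib Require Import Reals.
From Coquelicot Require Import Coquelicot.
Open Scope R_scope.

(* Points of M = [0,1] x T are represented by pairs (x, th) of reals with
   0 <= x <= 1 and 0 <= th < 1 (canonical representative of th in R/Z). *)
Definition Mpt (p : R * R) : Prop := 0 <= fst p <= 1 /\ 0 <= snd p < 1.

Definition frac (t : R) : R := t - IZR (Int_part t).

(* x^gamma for x >= 0 (with 0^gamma = 0, gamma > 0); extended by 0 for x < 0 *)
Definition powg (x g : R) : R := if Rle_dec x 0 then 0 else Rpower x g.

Definition f1L (g : R) (u : R -> R -> R) (x th : R) : R :=
  x * (1 + powg x g * u x th).

Definition f1 (g : R) (u : R -> R -> R) (x th : R) : R :=
  if Rle_dec x (3/4) then f1L g u x th else 4 * x - 3.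

Definition fmap (g : R) (u : R -> R -> R) (p : R * R) : R * R :=
  (f1 g u (fst p) (snd p), frac (4 * snd p)).

Definition Xset (g : R) (u : R -> R -> R) (p : R * R) : Prop :=
  Mpt p /\ exists i : nat, (i <= 3)%nat /\
    fst p <= f1 g u (3/4) ((INR i + snd p) / 4).

Definition distT (a b : R) : R := Rmin (Rabs (a - b)) (1 - Rabs (a - b)).

Definition distM (p q : R * R) : R :=
  Rmax (Rabs (fst p - fst q)) (distT (snd p) (snd q)).

Definition openX (g : R) (u : R -> R -> R) (U : R * R -> Prop) : Prop :=
  (forall p, U p -> Xset g u p) /\
  (forall p, U p -> exists eps, 0 < eps /\
      forall q, Xset g u q -> distM p q < eps -> U q).

Definition dx (u : R -> R -> R) (x t : R) : R := Derive (fun y => u y t) x.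
Definition dth (u : R -> R -> R) (x t : R) : R := Derive (fun s => u x s) t.

Definition C2_strip (a b : R) (u : R -> R -> R) : Prop :=
  forall x t, a < x < b ->
    ex_derive (fun y => u y t) x /\ ex_derive (fun s => u x s) t /\
    ex_derive (fun y => dx u y t) x /\ ex_derive (fun s => dx u x s) t /\
    ex_derive (fun y => dth u y t) x /\ ex_derive (fun s => dth u x s) t /\
    continuous (fun p : R * R => u (fst p) (snd p)) (x, t) /\
    continuous (fun p : R * R => dx u (fst p) (snd p)) (x, t) /\
    continuous (fun p : R * R => dth u (fst p) (snd p)) (x, t) /\
    continuous (fun p : R * R => dx (dx u) (fst p) (snd p)) (x, t) /\
    continuous (fun p : R * R => dth (dx u) (fst p) (snd p)) (x, t) /\
    continuous (fun p : R * R => dx (dth u) (fst p) (snd p)) (x, t) /\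
    continuous (fun p : R * R => dth (dth u) (fst p) (snd p)) (x, t).

(* |(Df)_{(x,th)} v| >= |v| (Euclidean norm), for the left branch:
   Df = [[d_x f1L, d_th f1L],[0,4]] *)
Definition Df_expanding (g : R) (u : R -> R -> R) (x th : R) : Prop :=
  forall v1 v2 : R,
    let a := Derive (fun y => f1L g u y th) x in
    let b := Derive (fun s => f1L g u x s) th in
    v1 ^ 2 + v2 ^ 2 <= (a * v1 + b * v2) ^ 2 + (4 * v2) ^ 2.

(* Main.v *)
Require Import Defs.
From Stdlib Require Import Reals Lra Lia ZArith.
From Coquelicot Require Import Coquelicot.
Open Scope R_scope.

Lemma exp_le1 z : z <= 0 -> exp z <= 1.
Proof.
intros H. destruct (Rle_lt_or_eq_dec _ _ H) as [H1|H1].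
- rewrite <- exp_0. left. now apply exp_increasing.
- rewrite H1, exp_0. lra.
Qed.

Section Ana.
Variables (g : R) (u : R -> R -> R) (d : R).
Hypothesis Hg : 0 < g.
Hypothesis Hd : 0 < d.
Hypothesis HC2 : C2_strip (- d) (3/4 + d) u.
Hypothesis Hpos : forall x t, 0 <= x <= 3/4 -> 0 < u x t.
Hypothesis Hle1 : forall x t, 0 <= x <= 3/4 -> f1L g u x t <= 1.
Hypothesis HDf : forall x t, 0 <= x <= 3/4 -> Df_expanding g u x t.
Hypothesis Hm : forall t, f1 g u (3/4) t > 15/16.
Hypothesis Hdx : forall x t, 0 <= x <= 3/4 -> Rabs (x * dx u x t) <= 1/2.

Lemma powg_pos x : 0 < x -> powg x g = exp (g * ln x).
Proof. intros H. unfold powg. destruct (Rle_dec x 0); [lra|reflexivity]. Qed.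

Lemma powg_bnd x : x <= 1 -> 0 <= powg x g <= 1.
Proof.
intros H. unfold powg. destruct (Rle_dec x 0); [lra|].
unfold Rpower. split. left; apply exp_pos.
apply exp_le1. assert (ln x <= 0). rewrite <- ln_1. apply ln_le; lra. nra.
Qed.

Lemma ux_ex x t : 0 <= x <= 3/4 -> ex_derive (fun y => u y t) x.
Proof. intros H. destruct (HC2 x t) as [H1 _]; [lra|exact H1]. Qed.

Lemma ut_ex x t : 0 <= x <= 3/4 -> ex_derive (fun s => u x s) t.
Proof. intros H. destruct (HC2 x t) as [_ [H1 _]]; [lra|exact H1]. Qed.

Definition Vd x t := 1 + exp (g * ln x) * u x t +
  x * (g / x * exp (g * ln x) * u x t + exp (g * ln x) * Derive (fun y => u y t) x).

Lemma f1L_deriv x t : 0 < x <= 3/4 -> is_derive (fun y => f1L g u y t) x (Vd x t).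
Proof.
intros H.
apply is_derive_ext_loc with (f := fun y => y * (1 + exp (g * ln y) * u y t)).
- assert (Hx : 0 < x) by lra.
  exists (mkposreal x Hx). intros y Hy. unfold ball in Hy; simpl in Hy.
  unfold AbsRing_ball, abs, minus, plus, opp in Hy; simpl in Hy.
  apply Rabs_lt_between' in Hy.
  unfold f1L. rewrite powg_pos; [reflexivity|lra].
- unfold Vd. auto_derive.
  + split; [lra|split; [apply ux_ex; lra|exact I]].
  + field. lra.
Qed.

Lemma Vd_ge1 x t : 0 < x <= 3/4 -> 1 <= Vd x t.
Proof.
intros H.
assert (HD := HDf x t (conj (Rlt_le _ _ (proj1 H)) (proj2 H))).
unfold Df_expanding in HD. specialize (HD 1 0). cbv zeta in HD.
assert (E: Derive (fun y => f1L g u y t) x = Vd x t) by (apply is_derive_unique; apply f1L_deriv; exact H).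
rewrite E in HD.
assert (HP : 0 < exp (g * ln x) <= 1).
{ split. apply exp_pos. apply exp_le1. assert (ln x <= 0). rewrite <- ln_1. apply ln_le; lra. nra. }
assert (HU : 0 < u x t) by (apply Hpos; lra).
assert (HX := Hdx x t (conj (Rlt_le _ _ (proj1 H)) (proj2 H))). unfold dx in HX.
apply Rabs_le_between in HX.
assert (Hgt : Vd x t > -1).
{ unfold Vd.
  replace (1 + exp (g * ln x) * u x t + x * (g / x * exp (g * ln x) * u x t + exp (g * ln x) * Derive (fun y : R => u y t) x))
   with (1 + exp (g * ln x) * u x t * (1 + g) + exp (g * ln x) * (x * Derive (fun y : R => u y t) x)) by (field; lra).
  assert (0 < exp (g * ln x) * u x t * (1 + g)). { apply Rmult_lt_0_compat. apply Rmult_lt_0_compat; lra. lra. }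
  nra. }
nra.
Qed.


Lemma cont_pos x t : 0 < x <= 3/4 -> continuity_pt (fun y => f1L g u y t) x.
Proof.
intros H. apply continuity_pt_filterlim. refine (ex_derive_continuous (fun y => _) _ _).
exists (Vd x t). apply f1L_deriv; lra.
Qed.

Lemma u_cont0 t : continuity_pt (fun y => u y t) 0.
Proof.
apply continuity_pt_filterlim. refine (ex_derive_continuous (fun y => _) _ _).
apply ux_ex; lra.
Qed.

Lemma cont_0 t : continuity_pt (fun y => f1L g u y t) 0.
Proof.
intros eps Heps.
destruct (u_cont0 t 1 Rlt_0_1) as [a1 [Ha1 H1]].
set (B := Rabs (u 0 t) + 2).
assert (HB : 0 < B) by (unfold B; pose proof (Rabs_pos (u 0 t)); lra).
exists (Rmin a1 (Rmin (1/2) (eps / B))).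
split. { apply Rmin_pos; [lra|apply Rmin_pos; [lra|]]. apply Rdiv_lt_0_compat; lra. }
intros x [_ Hx]. simpl in *. unfold Rdist in *.
assert (Hx1 : Rabs (x - 0) < a1) by (eapply Rlt_le_trans; [exact Hx|apply Rmin_l]).
assert (Hx2 : Rabs (x - 0) < 1/2) by (eapply Rlt_le_trans; [exact Hx|eapply Rle_trans; [apply Rmin_r|apply Rmin_l]]).
assert (Hx3 : Rabs (x - 0) < eps / B) by (eapply Rlt_le_trans; [exact Hx|eapply Rle_trans; [apply Rmin_r|apply Rmin_r]]).
destruct (Req_dec x 0) as [E|Hne].
{ subst x. unfold Rminus. rewrite Rplus_opp_r, Rabs_R0. lra. }
assert (HU := H1 x (conj (conj I (fun E => Hne (eq_sym E))) Hx1)).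
rewrite Rminus_0_r in Hx2, Hx3.
unfold f1L. rewrite Rmult_0_l, Rminus_0_r, Rabs_mult.
assert (HP : 0 <= powg x g <= 1) by (apply powg_bnd; apply Rabs_lt_between in Hx2; lra).
assert (HU2 : Rabs (u x t) <= Rabs (u 0 t) + 1).
{ pose proof (Rabs_triang_inv (u x t) (u 0 t)). lra. }
assert (H3 : Rabs (1 + powg x g * u x t) <= B).
{ eapply Rle_trans. apply Rabs_triang. rewrite Rabs_R1, Rabs_mult, (Rabs_pos_eq (powg x g)) by lra.
  unfold B. pose proof (Rabs_pos (u x t)). nra. }
apply Rle_lt_trans with (Rabs x * B).
{ apply Rmult_le_compat_l. apply Rabs_pos. exact H3. }
apply Rlt_le_trans with (eps / B * B). apply Rmult_lt_compat_r; lra.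
right. field. lra.
Qed.

Lemma f1L_0 t : f1L g u 0 t = 0.
Proof. unfold f1L. ring. Qed.

Lemma f1L_ge x t : 0 <= x <= 3/4 -> f1L g u x t - x = x * powg x g * u x t.
Proof. intros. unfold f1L. ring. Qed.

Lemma f1L_ge' x t : 0 <= x <= 3/4 -> x <= f1L g u x t.
Proof.
intros H. assert (H2 := f1L_ge x t H).
assert (0 <= powg x g) by (apply powg_bnd; lra).
assert (0 < u x t) by (apply Hpos; lra).
assert (0 <= x * powg x g * u x t). { apply Rmult_le_pos; [apply Rmult_le_pos|]; lra. }
lra.
Qed.

Lemma cont_all x t : 0 <= x <= 3/4 -> continuity_pt (fun y => f1L g u y t) x.
Proof.
intros H. destruct (Req_dec x 0) as [->|Hne]. apply cont_0. apply cont_pos. lra.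
Qed.

Lemma expand p q t : 0 <= p <= q -> q <= 3/4 -> f1L g u q t - f1L g u p t >= q - p.
Proof.
intros H1 H2.
destruct (Req_dec p 0) as [->|Hne].
{ rewrite f1L_0. pose proof (f1L_ge' q t). lra. }
destruct (MVT_gen (fun y => f1L g u y t) p q (fun y => Vd y t)) as [c [Hc Hc2]].
- intros x Hx. rewrite Rmin_left in Hx by lra. rewrite Rmax_right in Hx by lra.
  apply f1L_deriv. lra.
- intros x Hx. rewrite Rmin_left in Hx by lra. rewrite Rmax_right in Hx by lra.
  apply cont_pos. lra.
- rewrite Rmin_left in Hc by lra. rewrite Rmax_right in Hc by lra.
  simpl in Hc2. rewrite Hc2.
  assert (1 <= Vd c t) by (apply Vd_ge1; lra).
  nra.
Qed.

Lemma delta_lem s : 0 < s <= 3/4 -> exists del, 0 < del /\ (forall t x, 0 <= t <= 1 -> s <= x <= 3/4 -> f1L g u x t - x >= del).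
Proof.
intros Hs.
destruct (continuity_ab_min (fun t => u s t) 0 1) as [mx [Hmx1 Hmx2]].
{ lra. }
{ intros c _. apply continuity_pt_filterlim. refine (ex_derive_continuous (fun y => _) _ _).
  apply ut_ex. lra. }
exists (s * powg s g * u s mx). split.
{ rewrite powg_pos by lra. apply Rmult_lt_0_compat. apply Rmult_lt_0_compat. lra. apply exp_pos.
  apply Hpos. lra. }
intros t x Ht Hx.
assert (E1 := expand s x t (conj (Rlt_le _ _ (proj1 Hs)) (proj1 Hx)) (proj2 Hx)).

assert (E2 := f1L_ge s t (conj (Rlt_le _ _ (proj1 Hs)) (proj2 Hs))).
assert (u s mx <= u s t) by (apply Hmx1; lra).
assert (0 < s * powg s g). { rewrite powg_pos by lra. apply Rmult_lt_0_compat. lra. apply exp_pos. }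
assert (s * powg s g * u s mx <= s * powg s g * u s t) by (apply Rmult_le_compat_l; lra).
lra.
Qed.

Lemma ivt_f1L p q y t : 0 <= p <= q -> q <= 3/4 -> f1L g u p t <= y <= f1L g u q t ->
  exists z, p <= z <= q /\ f1L g u z t = y.
Proof.
intros H1 H2 H3.
destruct (Req_dec y (f1L g u p t)) as [E|E1]. { exists p. split; [lra|auto]. }
destruct (Req_dec y (f1L g u q t)) as [E|E2]. { exists q. split; [lra|auto]. }
assert (Hpq : p < q). { destruct (Req_dec p q) as [->|]; [lra|lra]. }
destruct (Ranalysis5.IVT_interv (fun z => f1L g u z t - y) p q) as [z [Hz Hz2]].
- intros a Ha. apply continuity_pt_minus. apply cont_all. lra. apply continuity_pt_const. intros a1 a2; reflexivity.
- exact Hpq.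
- lra.
- lra.
- exists z. split. exact Hz. lra.
Qed.


Lemma f1_left x t : x <= 3/4 -> f1 g u x t = f1L g u x t.
Proof. intros H. unfold f1. destruct (Rle_dec x (3/4)); [reflexivity|lra]. Qed.

Lemma f1_right x t : 3/4 < x -> f1 g u x t = 4*x-3.
Proof. intros H. unfold f1. destruct (Rle_dec x (3/4)); [lra|reflexivity]. Qed.

Lemma m_gt t : f1L g u (3/4) t > 15/16.
Proof. rewrite <- f1_left by lra. apply Hm. Qed.

Lemma m_le1 t : f1L g u (3/4) t <= 1.
Proof. apply Hle1. lra. Qed.

Definition tstep t := frac (4 * t).

Lemma iter_snd k p : snd (Nat.iter k (fmap g u) p) = Nat.iter k tstep (snd p).
Proof. induction k as [|k IH]; simpl. reflexivity. rewrite <- IH. reflexivity. Qed.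

Lemma iter_fst k p : fst (Nat.iter (S k) (fmap g u) p) =
  f1 g u (fst (Nat.iter k (fmap g u) p)) (Nat.iter k tstep (snd p)).
Proof. rewrite <- iter_snd. reflexivity. Qed.

Lemma frac_range t : 0 <= frac t < 1.
Proof. unfold frac. destruct (base_Int_part t). lra. Qed.

Lemma tseq_range k th : 0 <= th < 1 -> 0 <= Nat.iter k tstep th < 1.
Proof. intros H. destruct k; simpl. exact H. apply frac_range. Qed.

Definition Reach a b ths k y := exists x, a <= x <= b /\ fst (Nat.iter k (fmap g u) (x, ths)) = y.
Definition Sub a b ths k p q := forall y, p <= y <= q -> Reach a b ths k y.
Definition SubO a b ths k t := forall y, 0 < y <= t -> Reach a b ths k y.

Lemma SA a b ths k p q : Sub a b ths k p q -> 0 <= p <= q -> q <= 3/4 ->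
  Sub a b ths (S k) (f1L g u p (Nat.iter k tstep ths)) (f1L g u q (Nat.iter k tstep ths)).
Proof.
intros HS H1 H2 y Hy.
destruct (ivt_f1L p q y _ H1 H2 Hy) as [z [Hz Hz2]].
destruct (HS z Hz) as [x [Hx Hx2]].
exists x. split. exact Hx. rewrite iter_fst. rewrite Hx2. simpl. rewrite f1_left by lra. exact Hz2.
Qed.

Lemma SB a b ths k p q : Sub a b ths k p q -> 3/4 < p -> Sub a b ths (S k) (4*p-3) (4*q-3).
Proof.
intros HS H1 y Hy.
destruct (HS ((y+3)/4)) as [x [Hx Hx2]]. lra.
exists x. split. exact Hx. rewrite iter_fst. rewrite Hx2. rewrite f1_right by lra. field.
Qed.

Lemma SR a b ths k q : (forall y, 3/4 < y <= q -> Reach a b ths k y) -> SubO a b ths (S k) (4*q-3).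
Proof.
intros HS y Hy.
destruct (HS ((y+3)/4)) as [x [Hx Hx2]]. lra.
exists x. split. exact Hx. rewrite iter_fst. rewrite Hx2. rewrite f1_right by lra. field.
Qed.

Lemma SP a b ths k t : SubO a b ths k t -> 0 < t <= 3/4 ->
  SubO a b ths (S k) (f1L g u t (Nat.iter k tstep ths)).
Proof.
intros HS H1 y Hy.
destruct (ivt_f1L 0 t y (Nat.iter k tstep ths)) as [z [Hz Hz2]]; [lra|lra|rewrite f1L_0; lra|].
assert (z <> 0). { intros ->. rewrite f1L_0 in Hz2. lra. }
destruct (HS z) as [x [Hx Hx2]]. lra.
exists x. split. exact Hx. rewrite iter_fst. rewrite Hx2. simpl. rewrite f1_left by lra. exact Hz2.
Qed.

Lemma persist a b ths k i : SubO a b ths k (3/4) -> SubO a b ths (k + i) (3/4).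
Proof.
intros H. induction i as [|i IH]. rewrite Nat.add_0_r. exact H.
rewrite Nat.add_succ_r. intros y Hy. apply (SP a b ths (k+i) (3/4) IH). lra.
pose proof (m_gt (Nat.iter (k + i) tstep ths)). lra.
Qed.

Section Dyn.
Variables (a b ths w dl : R) (A : nat).
Hypothesis Hths : 0 <= ths < 1.
Hypothesis Hw : 0 < w <= 3/8.
Hypothesis Hdl : 0 < dl.
Hypothesis Hdlp : forall t x, 0 <= t <= 1 -> w <= x <= 3/4 -> f1L g u x t - x >= dl.
Hypothesis HA : 1 < INR A * dl.

Lemma th_range k : 0 <= Nat.iter k tstep ths <= 1.
Proof. pose proof (tseq_range k ths Hths). lra. Qed.

Lemma Arun n : forall k p q, 0 < p -> p < q -> q <= 1 -> w <= q - p -> Sub a b ths k p q ->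
  3/4 < q + INR n * dl ->
  exists i, (i <= n)%nat /\ exists p' q', Sub a b ths (k+i) p' q' /\ 0 < p' /\
    q - p <= q' - p' /\ 3/4 < q' /\ q' <= 1.
Proof.
induction n as [|n IH]; intros k p q H1 H2 H3 H4 HS H5.
- exists 0%nat. split. lia. exists p, q. rewrite Nat.add_0_r. simpl in H5. repeat split; lra || auto.
- destruct (Rlt_or_le (3/4) q) as [Hq|Hq].
  { exists 0%nat. split. lia. exists p, q. rewrite Nat.add_0_r. repeat split; lra || auto. }
  set (th := Nat.iter k tstep ths).
  assert (E1 := expand p q th (conj (Rlt_le _ _ H1) (Rlt_le _ _ H2)) Hq).
  assert (E2 := f1L_ge' p th (conj (Rlt_le _ _ H1) (Rle_trans _ _ _ (Rlt_le _ _ H2) Hq))).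
  assert (Hwq : w <= q <= 3/4) by lra.
  assert (E3 := Hdlp th q (th_range k) Hwq).
  assert (E4 := Hle1 q th (conj (Rlt_le _ _ (Rlt_trans _ _ _ H1 H2)) Hq)).
  rewrite S_INR in H5.
  destruct (IH (S k) (f1L g u p th) (f1L g u q th)) as [i [Hi [p' [q' [HS' HH]]]]].
  + lra.
  + lra.
  + exact E4.
  + lra.
  + apply SA; [exact HS|lra|exact Hq].
  + lra.
  + exists (S i). split. lia. exists p', q'. rewrite Nat.add_succ_r. rewrite <- Nat.add_succ_l.
    split. exact HS'. lra.
Qed.


Lemma Claim j : forall k p q, 0 < p -> p < q -> q <= 1 -> w <= q - p ->
  1 < 2 ^ j * (q - p) -> Sub a b ths k p q ->
  exists k', (k' <= k + j * (A + 3))%nat /\ exists t, w <= t /\ SubO a b ths k' t.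
Proof.
induction j as [|j IH]; intros k p q H1 H2 H3 H4 H5 HS.
- simpl in H5. lra.
- destruct (Arun A k p q H1 H2 H3 H4 HS) as [i [Hi [p' [q' [HS' [G1 [G2 [G3 G4]]]]]]]].
  { pose proof (pos_INR A). nra. }
  assert (Hj : 0 < 2 ^ j) by (apply pow_lt; lra).
  simpl in H5.
  set (k1 := (k + i)%nat) in *.
  destruct (Rlt_or_le (3/4) p') as [Hp|Hp].
  +
    destruct (IH (S k1) (4*p'-3) (4*q'-3)) as [k' [Hk' Ht]].
    * lra.
    * lra.
    * lra.
    * lra.
    * nra.
    * apply SB; assumption.
    * exists k'. split; [unfold k1 in Hk'; simpl; lia|exact Ht].
  + destruct (Rle_or_lt (3/4 + (q'-p')/2) q') as [Hc|Hc].
    * exists (S k1). split. unfold k1; simpl; lia.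
      exists (4*q'-3). split. lra.
      apply SR. intros y Hy. apply HS'. lra.
    * set (th := Nat.iter k1 tstep ths).
      assert (HS2 : Sub a b ths (S k1) (f1L g u p' th) (f1L g u (3/4) th)).
      { apply SA. intros y Hy. apply HS'. lra. lra. lra. }
      assert (E1 := expand p' (3/4) th (conj (Rlt_le _ _ G1) Hp) (Rle_refl _)).
      assert (E2 := m_gt th). assert (E3 := m_le1 th).
      destruct (Rle_or_lt (f1L g u p' th) (3/4)) as [HP|HP].
      -- exists (S (S k1)). split. unfold k1; simpl; lia.
         exists (4 * (15/16) - 3). split. lra.
         apply SR. intros y Hy. apply HS2. lra.
      -- destruct (IH (S (S k1)) (4 * f1L g u p' th - 3) (4 * f1L g u (3/4) th - 3)) as [k' [Hk' Ht]].
         ++ lra.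
         ++ lra.
         ++ lra.
         ++ lra.
         ++ nra.
         ++ apply SB; assumption.
         ++ exists k'. split; [unfold k1 in Hk'; simpl; lia|exact Ht].
Qed.

Lemma Ppha n : forall k t, w <= t -> SubO a b ths k t -> 3/4 < t + INR n * dl ->
  exists i, (i <= n)%nat /\ SubO a b ths (k + i) (3/4).
Proof.
induction n as [|n IH]; intros k t H1 HS H2.
- exists 0%nat. split. lia. rewrite Nat.add_0_r. intros y Hy. apply HS. simpl in H2. lra.
- destruct (Rle_or_lt (3/4) t) as [Ht|Ht].
  { exists 0%nat. split. lia. rewrite Nat.add_0_r. intros y Hy. apply HS. lra. }
  set (th := Nat.iter k tstep ths).
  assert (E3 := Hdlp th t (th_range k) (conj H1 (Rlt_le _ _ Ht))).
  rewrite S_INR in H2.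
  destruct (IH (S k) (f1L g u t th)) as [i [Hi HS']].
  + lra.
  + apply SP. exact HS. lra.
  + lra.
  + exists (S i). split. lia. rewrite Nat.add_succ_r. rewrite <- Nat.add_succ_l. exact HS'.
Qed.

Variable D : nat.
Hypothesis HD : 1 < 2 ^ D * w.
Hypothesis Hwab : w = b - a.
Hypothesis Ha : 0 < a.
Hypothesis Hb : b <= 1.

Lemma main_in n : (D * (A + 3) + A <= n)%nat -> SubO a b ths n (3/4).
Proof.
intros Hn.
assert (HC := Claim D 0 a b).
assert (Hsub : Sub a b ths 0 a b).
{ intros y Hy. exists y. split. exact Hy. reflexivity. }
assert (Hab : a < b) by lra.
assert (Hwb : w <= b - a) by lra.
assert (HD2 : 1 < 2 ^ D * (b - a)) by (rewrite <- Hwab; exact HD).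
destruct (HC Ha Hab Hb Hwb HD2 Hsub) as [k' [Hk' [t [Ht HS]]]].
destruct (Ppha A k' t Ht HS) as [i [Hi HS']].
{ lra. }
replace n with ((k' + i) + (n - (k' + i)))%nat by lia.
apply persist. exact HS'.
Qed.
End Dyn.

Lemma nat_gt r : exists n : nat, r < INR n.
Proof.
destruct (archimed r) as [H1 H2].
destruct (Z_le_gt_dec 0 (up r)) as [Hz|Hz].
- exists (Z.to_nat (up r)). rewrite INR_IZR_INZ, Z2Nat.id by exact Hz. lra.
- exists 0%nat. simpl. assert (IZR (up r) < 0) by (apply IZR_lt; lia). lra.
Qed.

Lemma pow_gt_INR x n : 2 <= x -> INR n < x ^ n.
Proof.
intros Hx. induction n as [|n IH]. simpl. lra.
rewrite S_INR. simpl. pose proof (pow_R1_Rle x n ltac:(lra)). nra.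
Qed.

Lemma main1D a b : 0 < a -> a < b -> b <= 1 -> b - a <= 3/8 ->
  exists N, forall ths, 0 <= ths < 1 -> forall n, (N <= n)%nat -> SubO a b ths n (3/4).
Proof.
intros Ha Hab Hb Hw.
destruct (delta_lem (b - a)) as [dl [Hdl Hdlp]]. lra.
destruct (nat_gt (1/dl)) as [A HA].
destruct (nat_gt (1/(b-a))) as [D HD].
assert (HA' : 1 < INR A * dl).
{ apply Rmult_lt_compat_r with (r := dl) in HA; [|lra]. replace (1/dl*dl) with 1 in HA by (field; lra). lra. }
assert (HD' : 1 < 2 ^ D * (b - a)).
{ pose proof (pow_gt_INR 2 D ltac:(lra)).
  apply Rmult_lt_compat_r with (r := b - a) in HD; [|lra]. replace (1/(b-a)*(b-a)) with 1 in HD by (field; lra). nra. }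
exists (D * (A + 3) + A)%nat.
intros ths Hths n Hn.
eapply main_in; try eassumption; try reflexivity; try lra.
Qed.
End Ana.

Lemma Int_part_unique r k : IZR k <= r -> r < IZR k + 1 -> Int_part r = k.
Proof.
intros H1 H2. destruct (base_Int_part r) as [H3 H4].
assert (A1 : (Int_part r < k + 1)%Z). { apply lt_IZR. rewrite plus_IZR. lra. }
assert (A2 : (k < Int_part r + 1)%Z). { apply lt_IZR. rewrite plus_IZR. lra. }
lia.
Qed.

Lemma frac_shift t z : frac (t + IZR z) = frac t.
Proof.
unfold frac. destruct (base_Int_part t) as [H3 H4].
rewrite (Int_part_unique (t + IZR z) (Int_part t + z)). rewrite plus_IZR. ring.
rewrite plus_IZR; lra. rewrite plus_IZR; lra.
Qed.

Lemma frac_id t : 0 <= t < 1 -> frac t = t.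
Proof. intros H. unfold frac. rewrite (Int_part_unique t 0). simpl. ring. simpl; lra. simpl; lra. Qed.

Lemma tseq_pow k t : 0 <= t < 1 -> Nat.iter k tstep t = frac (4 ^ k * t).
Proof.
intros H. induction k as [|k IH].
- simpl. rewrite Rmult_1_l. symmetry. apply frac_id. exact H.
- simpl. rewrite IH. unfold tstep, frac at 2.
  replace (4 * (4 ^ k * t - IZR (Int_part (4 ^ k * t)))) with (4 * (4 ^ k * t) + IZR (- (4 * Int_part (4 ^ k * t)))).
  rewrite frac_shift. rewrite Rmult_assoc. reflexivity. rewrite opp_IZR, mult_IZR. ring.
Qed.

Lemma phi_cont g u d i th0 : 0 < d -> C2_strip (- d) (3/4 + d) u ->
  continuity_pt (fun th => f1L g u (3/4) ((INR i + th) / 4)) th0.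
Proof.
intros Hd HC2. apply continuity_pt_filterlim. refine (ex_derive_continuous (fun y => _) _ _).
unfold f1L. auto_derive.
apply (ut_ex u d Hd HC2 (3/4)). lra.
Qed.

Lemma dist_small x0 th0 x th r : Rabs (x0 - x) < r -> Rabs (th0 - th) < r ->
  distM (x0, th0) (x, th) < r.
Proof.
intros H1 H2. unfold distM, distT; simpl. apply Rmax_lub_lt. exact H1.
eapply Rle_lt_trans. apply Rmin_l. exact H2.
Qed.

Lemma box g u d p0 r : 0 < d -> C2_strip (- d) (3/4 + d) u ->
  (forall t, f1 g u (3/4) t > 15/16) -> Xset g u p0 -> 0 < r ->
  exists a b h, 0 < a /\ a < b /\ b <= 1 /\ b - a <= 3/8 /\ 0 < h /\ 0 <= snd p0 /\ snd p0 + h < 1 /\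
   (forall x th, a <= x <= b -> snd p0 <= th <= snd p0 + h -> Xset g u (x, th) /\ distM p0 (x, th) < r).
Proof.
intros Hd HC2 Hm HX Hr.
destruct p0 as [x0 th0]. destruct HX as [[Hx0 Ht0] [i0 [Hi0 Hxi]]]. simpl in *.
set (rho := Rmin r (1/4)).
assert (Hr1 : rho <= r) by apply Rmin_l.
assert (Hr2 : rho <= 1/4) by apply Rmin_r.
assert (Hr3 : 0 < rho) by (apply Rmin_pos; lra).
destruct (Rle_or_lt x0 (1/2)) as [Hc|Hc].
- set (h := Rmin (r/2) ((1-th0)/2)).
  assert (Hh1 : h <= r/2) by apply Rmin_l.
  assert (Hh2 : h <= (1-th0)/2) by apply Rmin_r.
  assert (Hh3 : 0 < h) by (apply Rmin_pos; lra).
  exists (x0 + rho/4), (x0 + rho/2), h.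
  split; [lra|split; [lra|split; [lra|split; [lra|split; [lra|split; [lra|split; [lra|]]]]]]].
  intros x th Hx Hth. split.
  + split. unfold Mpt; simpl; lra.
    exists 0%nat. split. lia. simpl. pose proof (Hm ((0 + th) / 4)). lra.
  + apply dist_small; apply Rabs_def1; lra.
- assert (HC := phi_cont g u d i0 th0 Hd HC2).
  destruct (HC (rho/4)) as [alp [Halp Hal]]. lra.
  set (h := Rmin (Rmin (r/2) ((1-th0)/2)) (alp/2)).
  assert (Hh1 : h <= Rmin (r/2) ((1-th0)/2)) by apply Rmin_l.
  assert (Hh1a : Rmin (r/2) ((1-th0)/2) <= r/2) by apply Rmin_l.
  assert (Hh1b : Rmin (r/2) ((1-th0)/2) <= (1-th0)/2) by apply Rmin_r.
  assert (Hh2 : h <= alp/2) by apply Rmin_r.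
  assert (Hh3 : 0 < h) by (apply Rmin_pos; [apply Rmin_pos|]; lra).
  exists (x0 - rho/2), (x0 - rho/4), h.
  split; [lra|split; [lra|split; [lra|split; [lra|split; [lra|split; [lra|split; [lra|]]]]]]].
  intros x th Hx Hth. split.
  + split. unfold Mpt; simpl; lra.
    exists i0. split. exact Hi0. simpl.
    rewrite f1_left in Hxi |- * by lra.
    destruct (Req_dec th th0) as [->|Hne]. lra.
    assert (Hdd : Rabs (th - th0) < alp) by (apply Rabs_def1; lra).
    assert (Hd2 := Hal th (conj (conj I (fun E => Hne (eq_sym E))) Hdd)).
    simpl in Hd2. unfold Rdist in Hd2. apply Rabs_def2 in Hd2. lra.
  + apply dist_small; apply Rabs_def1; lra.
Qed.

Theorem proposition2p2 :
  forall g : R, 0 < g ->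
  exists eps : R, 0 < eps /\
  forall (c0 : R) (u : R -> R -> R),
    0 < c0 ->
    (exists d, 0 < d /\ C2_strip (- d) (3/4 + d) u) ->
    (forall x t, u x (t + 1) = u x t) ->
    (forall x t, 0 <= x <= 3/4 -> 0 < u x t) ->
    (forall t, u 0 t = c0) ->
    (forall x t, 0 <= x <= 3/4 -> f1L g u x t <= 1) ->
    (forall x t, 0 <= x <= 3/4 -> Df_expanding g u x t) ->
    (forall t, f1 g u (3/4) t > 15/16) ->
    (forall x t, 0 <= x <= 3/4 -> Rabs (x * dx u x t) <= eps) ->
    (forall x t, 0 <= x <= 3/4 -> Rabs (dth u x t) <= eps) ->
    forall U : R * R -> Prop,
      openX g u U -> (exists p, U p) ->
      exists n : nat,
        forall q, Xset g u q -> fst q <> 0 ->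
          exists p, U p /\ Nat.iter n (fmap g u) p = q.
Proof.
intros g Hg. exists (1/2). split. lra.
intros c0 u Hc0 [d [Hd HC2]] Hper Hpos Hu0 Hle1 HDf Hm Hdx Hdth U [HUX HUo] [p0 Hp0].
destruct (HUo p0 Hp0) as [r [Hr Hball]].
destruct (box g u d p0 r Hd HC2 Hm (HUX p0 Hp0) Hr) as [a [b [h [Ha [Hab [Hb [Hw [Hh [Ht0 [Hth Hbox]]]]]]]]]].
destruct (main1D g u d Hg Hd HC2 Hpos Hle1 HDf Hm Hdx a b Ha Hab Hb Hw) as [N HN].
destruct (nat_gt (1/h)) as [M HM].
assert (HP4 : 1 <= 4 ^ N) by (apply pow_R1_Rle; lra).
assert (HPM := pow_gt_INR 4 M ltac:(lra)).
set (P := 4 ^ (N + M)).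
assert (HPe : P = 4 ^ N * 4 ^ M) by (unfold P; apply pow_add).
assert (HM' : 1 < INR M * h).
{ apply Rmult_lt_compat_r with (r := h) in HM; [|lra]. replace (1/h*h) with 1 in HM by (field; lra). lra. }
assert (HMh : 1 < 4 ^ M * h) by nra.
assert (HPh : 1 < P * h) by (rewrite HPe; nra).
assert (HPpos : 0 < P) by nra.
exists (S (N + M)).
intros [xq thq] HXq Hxq0. destruct HXq as [[Hxq Htq] [i [Hi Hxi]]]. simpl in *.
set (s := (INR i + thq) / 4).
assert (Hi3 : INR i <= 3) by (replace 3 with (INR 3) by (simpl; ring); apply le_INR; exact Hi).
assert (Hi0 := pos_INR i).
assert (Hs : 0 <= s < 1) by (unfold s; lra).
destruct (archimed (snd p0 * P - s)) as [Hj1 Hj2].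
set (j := up (snd p0 * P - s)) in *.
set (ths := (IZR j + s) / P).
assert (E : ths * P = IZR j + s) by (unfold ths; field; lra).
assert (Hths1 : snd p0 <= ths <= snd p0 + h) by (split; nra).
assert (Hths0 : 0 <= ths < 1) by lra.
assert (Hiter : Nat.iter (N + M) tstep ths = s).
{ rewrite tseq_pow by exact Hths0. fold P. rewrite Rmult_comm, E, Rplus_comm, frac_shift.
  apply frac_id. exact Hs. }
assert (HS := HN ths Hths0 (N + M)%nat ltac:(lia)).
assert (HS2 := SP g u d Hg Hd HC2 a b ths (N + M) (3/4) HS ltac:(lra)).
rewrite Hiter in HS2.
rewrite f1_left in Hxi by lra. fold s in Hxi.
destruct (HS2 xq) as [x [Hx Hx2]]. lra.
exists (x, ths). split.
- destruct (Hbox x ths Hx Hths1) as [B1 B2]. apply Hball; assumption.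
- apply injective_projections. exact Hx2. change (snd (xq, thq)) with thq.
  change (snd (Nat.iter (S (N+M)) (fmap g u) (x, ths)) = thq). rewrite iter_snd. simpl snd. change (Nat.iter (S (N + M)) tstep ths) with (tstep (Nat.iter (N + M) tstep ths)).
  rewrite Hiter. unfold tstep.
  replace (4 * s) with (thq + IZR (Z.of_nat i)) by (unfold s; rewrite <- INR_IZR_INZ; field).
  rewrite frac_shift. apply frac_id. lra.
Qed.
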